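(* Let $N$ be a non-negative integer and let $h_1,h_2,l_1,l_2,\alpha_1,\alpha_2,\beta,E$ satisfy $\beta=N+1$. Then the singularity $x=0$ of the $q$-Heun equation $A^{\langle4\rangle}(x;h_1,h_2,l_1,l_2,\alpha_1,\alpha_2,\beta)g(x)=Eg(x)$ is apparent (in the sense of the context) if and only if $c(E)=0$, where $c(E)$ is the polynomial defined in the context.
   Context: $q\in\mathbb{C}$ with $0<|q|<1$; powers via a fixed branch of $\log q$; $t_1,t_2$ fixed non-zero constants. $A^{\langle 4\rangle}(x;h_1,h_2,l_1,l_2,\alpha_1,\alpha_2,\beta)=x^{-1}(x-q^{h_1+1/2}t_1)(x-q^{h_2+1/2}t_2)T_x^{-1}+q^{\alpha_1+\alpha_2}x^{-1}(x-q^{l_1-1/2}t_1)(x-q^{l_2-1/2}t_2)T_x-\{(q^{\alpha_1}+q^{\alpha_2})x+q^{(h_1+h_2+l_1+l_2+\alpha_1+\alpha_2)/2}(q^{\beta/2}+q^{-\beta/2})t_1t_2x^{-1}\}$, where $T_x^{\pm1}g(x)=g(q^{\pm1}x)$. Let $\lambda_1=(h_1+h_2-l_1-l_2-\alpha_1-\alpha_2-\beta+2)/2$. Apparency: a formal series $x^{\lambda_1}\sum_{n\ge0}d_nx^n$ solves the equation iff for all $n\ge1$ (with $d_{-1}=0$) $d_nt_1t_2q^{1-n+h_1+h_2-\lambda_1}(1-q^n)(1-q^{n-\beta})-d_{n-1}[E+q^{3/2-n-\lambda_1}(q^{h_1}t_1+q^{h_2}t_2)+q^{n-3/2+\lambda_1+\alpha_1+\alpha_2}(q^{l_1}t_1+q^{l_2}t_2)]+d_{n-2}q^{2-n-\lambda_1}(1-q^{n-2+\lambda_1+\alpha_1})(1-q^{n-2+\lambda_1+\alpha_2})=0$.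 With $\beta=N+1$, set $d_0=1$ and determine $d_1,\dots,d_N$ uniquely from these relations for $n=1,\dots,N$; the singularity $x=0$ is called apparent if the relation for $n=N+1$ (in which the coefficient of $d_{N+1}$ vanishes) then holds. The polynomial $c(E)$: set $x_n=t_1t_2q^{n-N+1+h_1+h_2-\alpha_1-2\lambda_1}(1-q^{-n})(1-q^{N-n+\lambda_1+\alpha_1})$, $y_n=q^{N-n+1/2+\lambda_1+\alpha_1+\alpha_2}(q^{l_1}t_1+q^{l_2}t_2)+q^{n-N-1/2-\lambda_1}(q^{h_1}t_1+q^{h_2}t_2)$, $z_n=q^{n-N-2+\alpha_1}(1-q^{N-n+1+\lambda_1+\alpha_2})(1-q^{N-n+2})$, and $c(E)=\sum(-1)^kx_{i_1}z_{i_1+1}\cdots x_{i_k}z_{i_k+1}\prod_{j\in\{1,\dots,N+1\}\setminus\{i_1,i_1+1,\dots,i_k,i_k+1\}}(E+y_j)$, summed over $k\ge0$ and integers $1\le i_1<\dots<i_k\le N$ with $i_{l+1}-i_l\ge2$. (When all $x_n\ne0$, this equals $x_1\cdots x_N[c_N(E)(E+y_{N+1})-c_{N-1}(E)z_{N+1}]$ where $c_{-1}=0$, $c_0=1$, $c_n(E)x_n=c_{n-1}(E)(E+y_n)-c_{n-2}(E)z_n$.) *)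

(* Defs.v *)
From HB Require Import structures.
From mathcomp Require Import all_boot all_order all_algebra.
From mathcomp Require Import all_classical all_reals.
From mathcomp Require Import sequences exp trigo.
From mathcomp Require Import complex.
Set Implicit Arguments. Unset Strict Implicit. Unset Printing Implicit Defensive.
Import Order.TTheory GRing.Theory Num.Theory.
Local Open Scope ring_scope.

Section QHeun.
Variable R : realType.
Local Notation C := (R[i]).

Definition cexp (z : C) : C :=
  Complex (expR (complex.Re z) * cos (complex.Im z)) (expR (complex.Re z) * sin (complex.Im z)).

(* q^a := exp(a * L), where L is the fixed branch of log q (exp L = q). *)
Definition qpow (L a : C) : C := cexp (a * L).

Variables (L t1 t2 h1 h2 l1 l2 al1 al2 be E : C).
Local Notation Q := (qpow L).

Definition lambda1 : C := (h1 + h2 - l1 - l2 - al1 - al2 - be + 2) / 2.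

Definition recA (n : nat) : C :=
  t1 * t2 * Q (1 - n%:R + h1 + h2 - lambda1) * (1 - Q n%:R) * (1 - Q (n%:R - be)).
Definition recB (n : nat) : C :=
  E + Q (3/2 - n%:R - lambda1) * (Q h1 * t1 + Q h2 * t2)
    + Q (n%:R - 3/2 + lambda1 + al1 + al2) * (Q l1 * t1 + Q l2 * t2).
Definition recC (n : nat) : C :=
  Q (2 - n%:R - lambda1) * (1 - Q (n%:R - 2 + lambda1 + al1))
    * (1 - Q (n%:R - 2 + lambda1 + al2)).

Definition rel (n : nat) (dm2 dm1 dn : C) : Prop :=
  dn * recA n - dm1 * recB n + dm2 * recC n = 0.

(* dpair n = (d_{n-1}, d_n), with d_{-1} = 0, d_0 = 1, and d_n solved from
   the relation for n (n >= 1) *)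
Fixpoint dpair (n : nat) : C * C :=
  match n with
  | 0 => (0, 1)
  | m.+1 => let: (a, b) := dpair m in
            (b, (b * recB m.+1 - a * recC m.+1) / recA m.+1)
  end.

(* x = 0 is apparent: with d_0 = 1 and d_1..d_N determined by the relations
   n = 1..N, the relation for n = N+1 holds (its d_{N+1}-coefficient
   vanishes when be = N+1, so d_{N+1} is arbitrary). *)
Definition apparent (N : nat) : Prop :=
  exists dN1 : C, rel N.+1 (dpair N).1 (dpair N).2 dN1.

Definition cx (N n : nat) : C :=
  t1 * t2 * Q (n%:R - N%:R + 1 + h1 + h2 - al1 - 2 * lambda1)
    * (1 - Q (- n%:R)) * (1 - Q (N%:R - n%:R + lambda1 + al1)).
Definition cy (N n : nat) : C :=
  Q (N%:R - n%:R + 1/2 + lambda1 + al1 + al2) * (Q l1 * t1 + Q l2 * t2)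
  + Q (n%:R - N%:R - 1/2 - lambda1) * (Q h1 * t1 + Q h2 * t2).
Definition cz (N n : nat) : C :=
  Q (n%:R - N%:R - 2 + al1) * (1 - Q (N%:R - n%:R + 1 + lambda1 + al2))
    * (1 - Q (N%:R - n%:R + 2)).

(* A set S of indices i in {1..N} (encoded as i' : 'I_N with i = i'+1)
   is admissible when it contains no two consecutive indices, i.e. the
   sorted elements i_1 < ... < i_k satisfy i_{l+1} - i_l >= 2. *)
Definition admissible (N : nat) (S : {set 'I_N}) : bool :=
  [forall i in S, forall j in S, (val i).+1 != val j].

(* j in {1..N+1} (encoded as j' : 'I_N.+1, j = j'+1) is covered by S when
   j = i or j = i+1 for some i in S *)
Definition covered (N : nat) (S : {set 'I_N}) (j : 'I_N.+1) : bool :=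
  [exists i in S, (val i == val j) || ((val i).+1 == val j)].

Definition cE (N : nat) : C :=
  \sum_(S : {set 'I_N} | admissible S)
     (-1) ^+ #|S| * (\prod_(i in S) (cx N (val i).+1 * cz N (val i).+2))
     * \prod_(j : 'I_N.+1 | ~~ covered S j) (E + cy N (val j).+1).

End QHeun.

(* Main.v *)
Require Import Defs.
From HB Require Import structures.
From mathcomp Require Import all_boot all_order all_algebra.
From mathcomp Require Import all_classical all_reals.
From mathcomp Require Import sequences exp trigo.
From mathcomp Require Import complex.
From mathcomp Require Import zify ring lra.
Set Implicit Arguments. Unset Strict Implicit. Unset Printing Implicit Defensive.
Import Order.TTheory GRing.Theory Num.Theory.
Local Open Scope ring_scope.

Section Comb.
Variable R0 : comNzRingType.

Definition memn n (S : {set 'I_n}) (k : nat) : bool := [exists i in S, val i == k].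
Definition adm n (p : nat -> bool) := [forall i : 'I_n, p i ==> ~~ p i.+1].
Definition cov (p : nat -> bool) (j : nat) := p j || ((0 < j)%N && p j.-1).
Definition G (w b : nat -> R0) n (p : nat -> bool) : R0 :=
  (-1) ^+ (\sum_(i < n | p i) 1)%N * \prod_(i < n | p i) w i
  * \prod_(j < n.+1 | ~~ cov p j) b j.
Definition F (w b : nat -> R0) n : R0 :=
  \sum_(S : {set 'I_n} | admissible S) (-1) ^+ #|S| * (\prod_(i in S) w (val i))
     * \prod_(j : 'I_n.+1 | ~~ covered S j) b (val j).

Lemma memn_ord n (S : {set 'I_n}) (i : 'I_n) : memn S i = (i \in S).
Proof.
apply/existsP/idP => [[j /andP[jS /eqP e]]|iS].
  by have <- : j = i by apply: val_inj.
by exists i; rewrite iS eqxx.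
Qed.

Lemma memn_ge n (S : {set 'I_n}) k : (n <= k)%N -> memn S k = false.
Proof.
move=> nk; apply/existsP => [[j /andP[_ /eqP e]]].
by have := ltn_ord j; rewrite e leqNgt => /negP; apply; rewrite ltnS.
Qed.

Lemma memn_eq n (S1 S2 : {set 'I_n}) : memn S1 =1 memn S2 -> S1 = S2.
Proof. by move=> h; apply/setP => i; rewrite -!memn_ord h. Qed.

Lemma memn_imset n m (f : 'I_n -> 'I_m) (hf : forall i, val (f i) = val i)
  (S : {set 'I_n}) k : memn (f @: S) k = memn S k.
Proof.
apply/existsP/existsP => [[j /andP[/imsetP[i iS ->] e]]|[i /andP[iS e]]].
  by exists i; rewrite iS -hf.
by exists (f i); rewrite imset_f // hf.
Qed.

Lemma memn_setU1 n (a : 'I_n) (S : {set 'I_n}) k :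
  memn (a |: S) k = (val a == k) || memn S k.
Proof.
apply/existsP/orP => [[j /andP[]]|].
  rewrite in_setU1 => /orP[/eqP->|jS] e; first by left.
  by right; apply/existsP; exists j; rewrite jS.
case=> [e|/existsP[j /andP[jS e]]]; first by exists a; rewrite setU11.
by exists j; rewrite in_setU1 jS orbT.
Qed.

Lemma memn_set1 n (a : 'I_n) k : memn [set a] k = (val a == k).
Proof.
apply/existsP/eqP => [[j /andP[/set1P -> /eqP]]|<-] //.
by exists a; rewrite set11 eqxx.
Qed.

Lemma memn_rev n (S : {set 'I_n}) k :
  memn ((@rev_ord n) @: S) k = (k < n)%N && memn S (n.-1 - k).
Proof.
apply/existsP/andP => [[j /andP[/imsetP[i iS ->] /eqP e]]|[kn /existsP[i /andP[iS /eqP e]]]].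
  have := ltn_ord i; move: e => /= e ilt.
  split; first by lia.
  by apply/existsP; exists i; rewrite iS /=; apply/eqP; lia.
exists (rev_ord i); rewrite imset_f //=; apply/eqP.
move: e; have := ltn_ord i; simpl; lia.
Qed.

Lemma memn_pre n m (f : 'I_n -> 'I_m) (hf : forall i, val (f i) = val i)
  (S : {set 'I_m}) k : memn [set i | f i \in S] k = (k < n)%N && memn S k.
Proof.
apply/existsP/andP => [[i /andP[]]|[kn /existsP[j /andP[jS /eqP e]]]].
  rewrite inE => iS /eqP e; split; first by rewrite -e ltn_ord.
  apply/existsP; exists (f i); rewrite iS /= hf; exact/eqP.
exists (Ordinal kn); rewrite inE /=.
have -> : f (Ordinal kn) = j by apply: val_inj; rewrite hf.
by rewrite jS eqxx.
Qed.

Lemma admP n (p : nat -> bool) : reflect (forall i, (i < n)%N -> p i -> ~~ p i.+1) (adm n p).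
Proof.
apply: (iffP forallP) => H i.
  by move=> ilt pi; have := H (Ordinal ilt); rewrite /= pi.
by apply/implyP; apply: H.
Qed.

Lemma adm_ext n (p p' : nat -> bool) : p =1 p' -> adm n p = adm n p'.
Proof. by move=> e; apply: eq_forallb => i; rewrite !e. Qed.

Lemma cov_ext (p p' : nat -> bool) : p =1 p' -> cov p =1 cov p'.
Proof. by move=> e j; rewrite /cov !e. Qed.

Lemma G_ext w b n (p p' : nat -> bool) : p =1 p' -> G w b n p = G w b n p'.
Proof.
move=> e; rewrite /G; congr (_ ^+ _ * _ * _).
- by apply: eq_bigl => i; rewrite e.
- by apply: eq_bigl => i; rewrite e.
- by apply: eq_bigl => i; rewrite (cov_ext e).
Qed.

Lemma covered_cov n (S : {set 'I_n}) (j : 'I_n.+1) : covered S j = cov (memn S) j.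
Proof.
rewrite /covered /cov.
apply/existsP/orP => [[i /andP[iS /orP[e|e]]]|[/existsP[i /andP[iS e]]|/andP[j0 /existsP[i /andP[iS /eqP e]]]]].
- by left; apply/existsP; exists i; rewrite iS e.
- by right; rewrite -(eqP e) /=; apply/existsP; exists i; rewrite iS eqxx.
- by exists i; rewrite iS e.
- by exists i; rewrite iS /=; apply/orP; right; rewrite e prednK.
Qed.

Lemma Fconv w b n :
  F w b n = \sum_(S : {set 'I_n} | adm n (memn S)) G w b n (memn S).
Proof.
apply: eq_big => [S|S _].
  apply/idP/idP => H.
    apply/forallP => i; apply/implyP; rewrite memn_ord => iS.
    apply/negP => /existsP[j /andP[jS /eqP e]].
    by have := forallP H i; rewrite iS /= => /forallP /(_ j); rewrite jS e eqxx.
  apply/forallP => i; apply/implyP => iS; apply/forallP => j; apply/implyP => jS.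
  apply/negP => /eqP e; have := forallP H i; rewrite memn_ord iS /= => /negP; apply.
  by apply/existsP; exists j; rewrite jS e eqxx.
rewrite /G; congr (_ ^+ _ * _ * _).
- by rewrite -sum1_card; apply: eq_bigl => i; rewrite memn_ord.
- by apply: eq_bigl => i; rewrite memn_ord.
- by apply: eq_bigl => j; rewrite covered_cov.
Qed.


Lemma G1 w b n (p : nat -> bool) : (forall k, (n <= k)%N -> p k = false) ->
  G w b n.+1 p = b n.+1 * G w b n p.
Proof.
move=> hp; rewrite /G.
have e1 : (\sum_(i < n.+1 | p i) 1)%N = (\sum_(i < n | p i) 1)%N.
  by rewrite big_mkcond big_ord_recr /= hp // addn0 -big_mkcond.
have e2 : \prod_(i < n.+1 | p i) w i = \prod_(i < n | p i) w i.
  by rewrite big_mkcond big_ord_recr /= hp // mulr1 -big_mkcond.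
have e3 : \prod_(j < n.+2 | ~~ cov p j) b j = (\prod_(j < n.+1 | ~~ cov p j) b j) * b n.+1.
  by rewrite big_mkcond big_ord_recr /= /cov /= !hp // -big_mkcond.
rewrite e1 e2 e3; ring.
Qed.

Lemma G0 w b (p : nat -> bool) : (forall k, p k = false) -> G w b 0 p = b 0.
Proof.
move=> hp; rewrite /G !big_ord0 expr0 mul1r.
by rewrite big_mkcond big_ord_recr big_ord0 /= /cov hp /= !mul1r.
Qed.

Lemma G2 w b m (p : nat -> bool) : (forall k, (m <= k)%N -> p k = false) ->
  G w b m.+2 (fun k => (m.+1 == k) || p k) = - w m.+1 * G w b m p.
Proof.
move=> hp; rewrite /G.
have ne : forall i : 'I_m, (m.+1 == i) = false.
  by move=> i; have := ltn_ord i; lia.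
have nm : (m.+1 == m) = false by lia.
have e1 : (\sum_(i < m.+2 | (m.+1 == i) || p i) 1)%N = (\sum_(i < m | p i) 1)%N.+1.
  rewrite big_mkcond !big_ord_recr /= eqxx (hp m) // nm /= addn0 addn1; congr _.+1.
  rewrite [RHS]big_mkcond; apply: eq_bigr => i _; by rewrite ne.
have e2 : \prod_(i < m.+2 | (m.+1 == i) || p i) w i = (\prod_(i < m | p i) w i) * w m.+1.
  rewrite big_mkcond !big_ord_recr /= eqxx (hp m) // nm /= mulr1; congr (_ * _).
  rewrite [RHS]big_mkcond; apply: eq_bigr => i _; by rewrite ne.
have e3 : \prod_(j < m.+3 | ~~ cov (fun k => (m.+1 == k) || p k) j) b j
          = \prod_(j < m.+1 | ~~ cov p j) b j.
  rewrite big_mkcond !big_ord_recr /= /cov /= eqxx /= !orbT /= !mulr1 nm /=.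
  have -> : (m.+1 == m.-1) = false by lia.
  rewrite [RHS]big_mkcond big_ord_recr /=; congr (_ * _).
  apply: eq_bigr => i _.
  have := ltn_ord i => ilt.
  have -> : (m.+1 == i) = false by lia.
  by have -> : (m.+1 == i.-1) = false by lia.
rewrite e1 e2 e3 exprS; ring.
Qed.

Lemma G3 w b n (p : nat -> bool) : (forall k, (n <= k)%N -> p k = false) ->
  G w b n (fun k => (k < n)%N && p (n.-1 - k)%N) =
  G (fun i => w (n.-1 - i)%N) (fun j => b (n - j)%N) n p.
Proof.
move=> hp; rewrite /G; congr (_ ^+ _ * _ * _).
- rewrite [RHS](reindex_inj rev_ord_inj); apply: eq_bigl => i /=.
  by rewrite ltn_ord /=; congr (p _); have := ltn_ord i; lia.
- rewrite [RHS](reindex_inj rev_ord_inj); apply: eq_big => i /=.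
    by rewrite ltn_ord /=; congr (p _); have := ltn_ord i; lia.
  by move=> _; congr (w _); have := ltn_ord i; lia.
- rewrite [RHS](reindex_inj rev_ord_inj); apply: eq_big => j /=.
    have := ltn_ord j; rewrite ltnS => jn.
    have -> : (n.+1 - j.+1 = n - j)%N by lia.
    congr (~~ _); rewrite /cov.
    case: (nat_of_ord j) jn => [|j'] jn /=.
      by rewrite !subn0 (hp n) // orbF.
    have -> : (n.-1 - j' = n - j'.+1)%N by lia.
    have -> : (n.-1 - j'.+1 = (n - j'.+1).-1)%N by lia.
    have -> : (j' < n)%N = true by lia.
    have -> : (j'.+1 < n)%N = (0 < n - j'.+1)%N by lia.
    by rewrite orbC.
  by move=> _; congr (b _); have := ltn_ord j; lia.
Qed.

Lemma A1 n (p : nat -> bool) : (forall k, (n <= k)%N -> p k = false) ->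
  adm n.+1 p = adm n p.
Proof.
move=> hp; apply/admP/admP => H i ilt pi.
  by apply: H => //; apply: leqW.
have [iln|nle] := ltnP i n; first exact: H.
by rewrite hp in pi.
Qed.

Lemma A2 m (p : nat -> bool) : (forall k, (m <= k)%N -> p k = false) ->
  adm m.+2 (fun k => (m.+1 == k) || p k) = adm m p.
Proof.
move=> hp; apply/admP/admP => H i ilt.
  move=> pi; have := H i (leqW (leqW ilt)); rewrite pi orbT => /(_ isT).
  by rewrite negb_or => /andP[].
case/orP => [/eqP <-|pi].
  rewrite negb_or (hp m.+2); last by rewrite leqW.
  by rewrite andbT; apply/negP; lia.
have iltm : (i < m)%N by case: (ltnP i m) => // /hp; rewrite pi.
by rewrite negb_or H // andbT; apply/negP; lia.
Qed.

Lemma A3 n (p : nat -> bool) : (forall k, (n <= k)%N -> p k = false) ->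
  adm n (fun k => (k < n)%N && p (n.-1 - k)%N) = adm n p.
Proof.
move=> hp; apply/admP/admP => H i ilt.
  move=> pi; apply/negP => pi1.
  have i1n : (i.+1 < n)%N by case: (ltnP i.+1 n) => // /hp; rewrite pi1.
  have := H (n.-1 - i.+1)%N; rewrite /=.
  have -> : (n.-1 - (n.-1 - i.+1) = i.+1)%N by lia.
  have -> : ((n.-1 - i.+1).+1 < n)%N = true by lia.
  have -> : (n.-1 - (n.-1 - i.+1).+1 = i)%N by lia.
  have -> : ((n.-1 - i.+1) < n)%N = true by lia.
  by rewrite pi pi1 => /(_ isT isT).
case/andP => _ pi; apply/negP => /andP[i1n pi1].
have := H (n.-1 - i.+1)%N.
have -> : ((n.-1 - i.+1).+1 = n.-1 - i)%N by lia.
by rewrite pi pi1 => /(_ ltac:(lia) isT).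
Qed.


Lemma Frec1 w b n :
  \sum_(S : {set 'I_n.+1} | adm n.+1 (memn S) && ~~ memn S n) G w b n.+1 (memn S)
  = b n.+1 * F w b n.
Proof.
rewrite Fconv big_distrr /=.
pose f := widen_ord (leqnSn n).
have hf : forall i, val (f i) = val i by [].
rewrite (reindex_onto (fun S' : {set 'I_n} => f @: S')
           (fun S : {set 'I_n.+1} => [set i : 'I_n | f i \in S])).
  apply: eq_big => [S'|S' _].
    rewrite (adm_ext _ (memn_imset hf S')) A1; last exact: memn_ge.
    rewrite memn_imset // memn_ge // andbT.
    have -> : [set i | f i \in f @: S'] == S'.
      apply/eqP/memn_eq => k; rewrite memn_pre // memn_imset //.
      by case kn: (k < n)%N => //=; rewrite memn_ge // leqNgt kn.
    by rewrite andbT.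
  rewrite (G_ext _ _ _ (memn_imset hf S')) G1 //; exact: memn_ge.
move=> S /andP[_ Sn]; apply: memn_eq => k; rewrite memn_imset // memn_pre //.
case: (ltnP k n) => //= kn; case: (eqVneq k n) => [->|kne]; first by rewrite (negbTE Sn).
by rewrite memn_ge // ltn_neqAle eq_sym kne kn.
Qed.

Lemma Frec2 w b m :
  \sum_(S : {set 'I_m.+2} | adm m.+2 (memn S) && memn S m.+1) G w b m.+2 (memn S)
  = - w m.+1 * F w b m.
Proof.
rewrite Fconv big_distrr /=.
pose f := widen_ord (leqW (leqnSn m)).
have hf : forall i, val (f i) = val i by [].
have hm : forall (S'' : {set 'I_m}) k,
    memn (ord_max |: f @: S'') k = (m.+1 == k) || memn S'' k.
  by move=> S'' k; rewrite memn_setU1 memn_imset.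
rewrite (reindex_onto (fun S'' : {set 'I_m} => ord_max |: f @: S'')
           (fun S : {set 'I_m.+2} => [set i : 'I_m | f i \in S])).
  apply: eq_big => [S''|S'' _].
    rewrite (adm_ext _ (hm S'')) A2; last exact: memn_ge.
    rewrite hm eqxx /=.
    have -> : [set i | f i \in ord_max |: f @: S''] == S''.
      apply/eqP/memn_eq => k; rewrite memn_pre // hm.
      case kn: (k < m)%N => /=.
        by have -> : (m.+1 == k) = false by lia.
      by rewrite memn_ge // leqNgt kn.
    by rewrite !andbT.
  rewrite (G_ext _ _ _ (hm S'')) G2 //; exact: memn_ge.
move=> S /andP[aS Sm]; apply: memn_eq => k; rewrite hm memn_pre //.
have Sm' : memn S m = false.
  apply/negbTE/negP => Smm; move/admP: aS => /(_ m (leqW (ltnSn m)) Smm).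
  by rewrite Sm.
case: (eqVneq m.+1 k) => [<-|ne] /=; first by rewrite Sm.
case: (ltnP k m) => //= km; case: (eqVneq k m) => [->|ne2]; first by rewrite Sm'.
by rewrite memn_ge //; lia.
Qed.

Lemma F0 w b : F w b 0 = b 0.
Proof.
rewrite Fconv (eq_bigl (pred1 (@finset.set0 'I_0))) ?big_pred1_eq.
  by rewrite G0 // => k; rewrite memn_ge.
move=> S /=; have -> : S == @finset.set0 'I_0.
  by apply/eqP/memn_eq => k; rewrite !memn_ge.
by apply/admP => i.
Qed.

Lemma Fsplit w b n : F w b n.+1 = b n.+1 * F w b n +
  \sum_(S : {set 'I_n.+1} | adm n.+1 (memn S) && memn S n) G w b n.+1 (memn S).
Proof. by rewrite Fconv (bigID (fun S => memn S n)) /= addrC Frec1. Qed.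

Lemma F1 w b : F w b 1 = b 1 * b 0 - w 0.
Proof.
rewrite Fsplit F0 (eq_bigl (pred1 [set (ord0 : 'I_1)])) ?big_pred1_eq.
  congr (_ + _); rewrite /G.
  have hp : memn [set (ord0 : 'I_1)] =1 (fun k => k == 0)%N.
    by move=> k; rewrite memn_set1 eq_sym.
  rewrite big_mkcond !big_ord_recr !big_ord0 /= !hp /=.
  rewrite big_mkcond !big_ord_recr !big_ord0 /= !hp /=.
  rewrite big_mkcond !big_ord_recr !big_ord0 /= /cov !hp /=.
  by rewrite add0n expr1 !mul1r mulr1 mulN1r.
move=> S /=; apply/andP/eqP => [[_ S0]|->].
  apply/memn_eq => k; rewrite memn_set1.
  case: k => [|k]; first by rewrite S0.
  by rewrite memn_ge.
split.
  apply/admP => i ilt _; have -> : i = 0%N by lia.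
  by rewrite memn_ge.
by rewrite memn_set1.
Qed.

Lemma Frec w b m : F w b m.+2 = b m.+2 * F w b m.+1 - w m.+1 * F w b m.
Proof. by rewrite Fsplit Frec2 mulNr. Qed.


Lemma G_extwb w b w' b' n p :
  (forall i, (i < n)%N -> w i = w' i) -> (forall j, (j <= n)%N -> b j = b' j) ->
  G w b n p = G w' b' n p.
Proof.
move=> hw hb; rewrite /G; congr (_ * _ * _).
  by apply: eq_bigr => i _; apply: hw.
by apply: eq_bigr => j _; apply: hb; rewrite -ltnS.
Qed.

Lemma Frev w b w' b' n :
  (forall i, (i < n)%N -> w' i = w (n.-1 - i)%N) ->
  (forall j, (j <= n)%N -> b' j = b (n - j)%N) ->
  F w b n = F w' b' n.
Proof.
move=> hw hb; rewrite !Fconv.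
have K : cancel (fun S : {set 'I_n} => (@rev_ord n) @: S) (fun S => (@rev_ord n) @: S).
  move=> S; apply: memn_eq => k; rewrite !memn_rev.
  case kn: (k < n)%N => /=; last by rewrite memn_ge // leqNgt kn.
  have -> : (n.-1 - k < n)%N = true by lia.
  by have -> : (n.-1 - (n.-1 - k) = k)%N by lia.
rewrite (reindex_inj (can_inj K)); apply: eq_big => [S|S _].
  by rewrite (adm_ext _ (memn_rev S)) A3 //; apply: memn_ge.
rewrite (G_ext _ _ _ (memn_rev S)) G3; last by apply: memn_ge.
by apply: G_extwb => [i|j] H; rewrite ?hw ?hb.
Qed.

End Comb.

Section Cont.
Variable K : fieldType.
Variables A B C : nat -> K.

Fixpoint dp n : K * K := match n with
  | 0 => (0, 1)
  | m.+1 => let: (a, b) := dp m in (b, (b * B m.+1 - a * C m.+1) / A m.+1)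
  end.
Fixpoint Dp n : K * K := match n with
  | 0 => (0, 1)
  | m.+1 => let: (a, b) := Dp m in (b, B m.+1 * b - A m * C m.+1 * a)
  end.

Lemma Dp1 n : (Dp n.+1).1 = (Dp n).2.
Proof. by rewrite /=; case: (Dp n). Qed.
Lemma Dp2 n : (Dp n.+1).2 = B n.+1 * (Dp n).2 - A n * C n.+1 * (Dp n).1.
Proof. by rewrite /=; case: (Dp n). Qed.

Lemma dpDp N : (forall n, (0 < n <= N)%N -> A n != 0) ->
  forall n, (n <= N)%N ->
  (dp n).2 * \prod_(i < n) A i.+1 = (Dp n).2 /\
  (dp n).1 * \prod_(i < n) A i.+1 = A n * (Dp n).1.
Proof.
move=> hA; elim=> [|n IH] nN; first by rewrite big_ord0 /= mulr0 mul0r mulr1.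
have [IH2 IH1] := IH (ltnW nN).
have An : A n.+1 != 0 by apply: hA; rewrite nN.
rewrite Dp1 Dp2 big_ord_recr /=.
move: IH1 IH2; case: (dp n) => a b /= IH1 IH2; split.
  set P := \prod_(i < n) A i.+1.
  have -> : (b * B n.+1 - a * C n.+1) / A n.+1 * (P * A n.+1) =
            (b * P) * B n.+1 - C n.+1 * (a * P) by field.
  rewrite IH1 IH2; ring.
by rewrite mulrA IH2 mulrC.
Qed.

Lemma FDp k : F (fun i => A i.+1 * C i.+2) (fun j => B j.+1) k = (Dp k.+1).2.
Proof.
suff : F (fun i => A i.+1 * C i.+2) (fun j => B j.+1) k = (Dp k.+1).2 /\
       F (fun i => A i.+1 * C i.+2) (fun j => B j.+1) k.+1 = (Dp k.+2).2 by case.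
elim: k => [|k [IH1 IH2]].
  rewrite F0 F1 Dp2 Dp2 Dp1 Dp2 /=; split; ring.
split=> //; rewrite Frec IH1 IH2 [in RHS]Dp2 Dp1; ring.
Qed.

End Cont.
Section Cx.
Variable R : realType.

Lemma cexpD (z1 z2 : R[i]) : cexp z1 * cexp z2 = cexp (z1 + z2).
Proof.
case: z1 => a1 b1; case: z2 => a2 b2; rewrite /cexp /=.
rewrite expRD cosD sinD; apply/eqP; rewrite eq_complex /=; apply/andP; split; apply/eqP; ring.
Qed.

Lemma cexp0 : cexp (0 : R[i]) = 1.
Proof. by rewrite /cexp /= expR0 cos0 sin0 mul1r mulr0. Qed.

Lemma norm_cexp (z : R[i]) : `|cexp z| = (expR (complex.Re z))%:C%C.
Proof.
rewrite normc_def /cexp /=.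
have -> : (expR (complex.Re z) * cos (complex.Im z)) ^+ 2 + (expR (complex.Re z) * sin (complex.Im z)) ^+ 2 = expR (complex.Re z) ^+ 2.
  by rewrite !exprMn -mulrDr cos2Dsin2 mulr1.
by rewrite sqrtr_sqr ger0_norm // expR_ge0.
Qed.

Lemma cexp_neq0 (z : R[i]) : cexp z != 0.
Proof.
apply/negP => /eqP e; have := norm_cexp z; rewrite e normr0 => /esym/eqP.
by rewrite -(rmorph0 (real_complex R)) eq_complex /= eqxx andbT gt_eqF // expR_gt0.
Qed.


Lemma natC k : (k%:R : R[i]) = Complex (k%:R) 0.
Proof.
elim: k => [|k IH] //; rewrite -addn1 !natrD IH.
by apply/eqP; rewrite eq_complex /= addr0 !eqxx.
Qed.

Lemma ReM_nat k (L : R[i]) : complex.Re (k%:R * L) = k%:R * complex.Re L.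
Proof. by rewrite natC; case: L => a b /=; ring. Qed.

Lemma Qnat_neq1 (L : R[i]) k : complex.Re L < 0 -> (0 < k)%N -> qpow L k%:R != 1.
Proof.
move=> hL k0; apply/negP => /eqP e.
have := norm_cexp (k%:R * L); rewrite -/(qpow L k%:R) e normr1 ReM_nat.
move/eqP; rewrite -(rmorph1 (real_complex R)) eq_complex /= eqxx andbT eq_sym.
move/eqP => e'.
have : expR (k%:R * complex.Re L) < 1 by rewrite expR_lt1 pmulr_rlt0 // ltr0n.
by rewrite e' ltxx.
Qed.

End Cx.

Lemma key4 (R : realType) (t1 t2 Qa Qc Qa' Qc' f1 f2 f3 f4 g1 g2 g3 g4 : R[i]) :
  Qa * Qc = Qa' * Qc' -> f1 = g4 -> f2 = g1 -> f3 = g2 -> f4 = g3 ->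
  t1 * t2 * Qa * f1 * f2 * (Qc * f3 * f4) = t1 * t2 * Qa' * g1 * g2 * (Qc' * g3 * g4).
Proof.
move=> e ? ? ? ?; subst.
have -> : t1 * t2 * Qa * g4 * g1 * (Qc * g2 * g3) = t1 * t2 * (Qa * Qc) * g1 * g2 * g3 * g4 by ring.
rewrite e; ring.
Qed.

Theorem proposition3p8 (R : realType) (q L t1 t2 : R[i])
    (hq0 : 0 < `|q|) (hq1 : `|q| < 1) (hL : cexp L = q)
    (ht1 : t1 != 0) (ht2 : t2 != 0)
    (N : nat) (h1 h2 l1 l2 al1 al2 be E : R[i])
    (hbe : be = N.+1%:R) :
  apparent L t1 t2 h1 h2 l1 l2 al1 al2 be E N <->
  cE L t1 t2 h1 h2 l1 l2 al1 al2 be E N = 0.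
Proof.
set A := recA L t1 t2 h1 h2 l1 l2 al1 al2 be.
set B := recB L t1 t2 h1 h2 l1 l2 al1 al2 be E.
set Cc := recC L h1 h2 l1 l2 al1 al2 be.
have hdp : forall n, dpair L t1 t2 h1 h2 l1 l2 al1 al2 be E n = dp A B Cc n.
  by elim => //= n ->.
have ReL : complex.Re L < 0.
  move: hq1; rewrite -hL norm_cexp -(rmorph1 (real_complex R)) ltcR.
  by rewrite expR_lt1.
have Q0 : qpow L 0 = 1 by rewrite /qpow mul0r cexp0.
have QD : forall a c, qpow L a * qpow L c = qpow L (a + c).
  by move=> a c; rewrite /qpow cexpD mulrDl.
have Qnz : forall a, qpow L a != 0 by move=> a; apply: cexp_neq0.
have QN : forall x, qpow L x != 1 -> qpow L (- x) != 1.
  move=> x hx; apply/negP => /eqP e; have := QD (-x) x.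
  by rewrite e mul1r addNr Q0 => h; rewrite h eqxx in hx.
have hA : forall n, (0 < n <= N)%N -> A n != 0.
  move=> n /andP[n0 nN]; rewrite /A /recA.
  have e1 : 1 - qpow L n%:R != 0 by rewrite subr_eq0 eq_sym; apply: Qnat_neq1.
  have e2 : 1 - qpow L (n%:R - be) != 0.
    rewrite subr_eq0 eq_sym.
    have -> : n%:R - be = - (N.+1 - n)%:R by rewrite hbe natrB ?opprB // leqW.
    by apply: QN; apply: Qnat_neq1 => //; rewrite subn_gt0 ltnS.
  apply: mulf_neq0 e2; apply: mulf_neq0 e1; apply: mulf_neq0 (Qnz _).
  exact: mulf_neq0.
have hA0 : A N.+1 = 0 by rewrite /A /recA hbe subrr Q0 subrr mulr0.
have hcE : cE L t1 t2 h1 h2 l1 l2 al1 al2 be E N = (Dp A B Cc N.+1).2.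
  rewrite -(FDp A B Cc N).
  have -> : cE L t1 t2 h1 h2 l1 l2 al1 al2 be E N =
    F (fun i => cx L t1 t2 h1 h2 l1 l2 al1 al2 be N i.+1 * cz L h1 h2 l1 l2 al1 al2 be N i.+2)
      (fun j => E + cy L t1 t2 h1 h2 l1 l2 al1 al2 be N j.+1) N by [].
  apply: Frev => [i iN|j jN].
    rewrite /A /Cc /recA /recC /cx /cz.
    have e1 : (N.-1 - i).+1 = (N - i)%N by lia.
    have e2 : (N.-1 - i).+2 = (N - i).+1 by lia.
    have c1 : ((N - i).+1%:R : R[i]) = N%:R - i%:R + 1 by rewrite -addn1 natrD natrB // ltnW.
    have c2 : ((N - i)%:R : R[i]) = N%:R - i%:R by rewrite natrB // ltnW.
    have c3 : (i.+1%:R : R[i]) = i%:R + 1 by rewrite -addn1 natrD.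
    have c4 : (i.+2%:R : R[i]) = i%:R + 2 by rewrite -addn2 natrD.
    rewrite e1 c1 c2 c3 c4 hbe.
    have c5 : (N.+1%:R : R[i]) = N%:R + 1 by rewrite -addn1 natrD.
    rewrite c5.
    apply: key4.
    - rewrite !QD; congr (qpow L _); ring.
    - congr (1 - qpow L _); ring.
    - congr (1 - qpow L _); ring.
    - congr (1 - qpow L _); ring.
    - congr (1 - qpow L _); ring.
  rewrite /B /recB /cy.
  have c1 : ((N - j).+1%:R : R[i]) = N%:R - j%:R + 1 by rewrite -addn1 natrD natrB.
  have c3 : (j.+1%:R : R[i]) = j%:R + 1 by rewrite -addn1 natrD.
  rewrite c1 c3 [X in _ = E + X]addrC [in RHS]addrA.
  congr (_ + qpow L _ * _ + qpow L _ * _).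
    by field.
  by field.
rewrite /apparent /rel hdp hcE -/A -/B -/Cc.
have [e2 e1] := @dpDp _ A B Cc N hA N (leqnn N).
have hP : \prod_(i < N) A i.+1 != 0.
  by rewrite prodf_seq_neq0; apply/allP => i _ /=; apply: hA; rewrite ltn_ord.
rewrite Dp2 -e2.
have -> : A N * Cc N.+1 * (Dp A B Cc N).1 = Cc N.+1 * ((dp A B Cc N).1 * \prod_(i < N) A i.+1) by rewrite e1; ring.
move: hP; set P := \prod_(i < N) A i.+1 => hP.
rewrite /Defs.rel -/A -/B -/Cc.
set a := (dp A B Cc N).1; set b := (dp A B Cc N).2.
split.
  move=> [d H]; rewrite hA0 mulr0 add0r in H.
  have -> : B N.+1 * (b * P) - Cc N.+1 * (a * P) = - P * (- (b * B N.+1) + a * Cc N.+1) by ring.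
  by rewrite H mulr0.
move=> H; exists 0; rewrite hA0 mulr0 add0r.
have : - P * (- (b * B N.+1) + a * Cc N.+1) = 0 by rewrite -H; ring.
by move/eqP; rewrite mulf_eq0 oppr_eq0 (negbTE hP) /= => /eqP.
Qed.
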